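(* Let $w$ be a non-empty finite LSP word. Then there exists a letter $a$ occurring in $w$ such that $wa$ is LSP.
   Context: A finite word $u$ is a left special factor of a word $w$ if there are distinct letters $x\neq y$ such that $xu$ and $yu$ are factors of $w$. A word is LSP if every left special factor of it is a prefix of it. *)

(* Defs.v *)
From mathcomp Require Import all_boot.
Set Implicit Arguments. Unset Strict Implicit. Unset Printing Implicit Defensive.

Definition factor {A : eqType} (u w : seq A) : Prop := infix u w.

Definition left_special {A : eqType} (u w : seq A) : Prop :=
  exists x y : A, x <> y /\ factor (x :: u) w /\ factor (y :: u) w.

Definition LSP {A : eqType} (w : seq A) : Prop :=
  forall u : seq A, left_special u w -> prefix u w.

(* Main.v *)
Require Import Defs.
From mathcomp Require Import all_boot.
Set Implicit Arguments.
Unset Strict Implicit.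

Lemma prefix_le (A : eqType) (s t w : seq A) :
  prefix s w -> prefix t w -> size s <= size t -> prefix s t.
Proof.
move=> hs /prefixP[t' ht] le; move: hs; rewrite ht !prefixE takel_cat //.
Qed.

Lemma suffix_le (A : eqType) (s t w : seq A) :
  suffix s w -> suffix t w -> size s <= size t -> suffix s t.
Proof.
move=> hs ht le; rewrite /suffix; apply: (@prefix_le _ _ _ (rev w)) => //; by rewrite !size_rev.
Qed.

Lemma suffix_same_size (A : eqType) (s t w : seq A) :
  suffix s w -> suffix t w -> size s = size t -> s = t.
Proof.
rewrite !suffixE => /eqP hs /eqP ht e; by rewrite -{1}hs e.
Qed.

Theorem lemma7 (A : eqType) (w : seq A) :
  w <> [::] -> LSP w -> exists2 a : A, a \in w & LSP (rcons w a).
Proof.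
move=> wne Hl.
have [c _] : exists c, c \in w by case: w wne {Hl} => [//|c w'] _; exists c; rewrite inE eqxx.
have n0 : 0 < size w by case: w wne {Hl}.
set n := size w in n0 *.
pose P k := (k < n) && prefix (drop (n - k) w) w.
have Pex : exists k, P k by exists 0; rewrite /P n0 subn0 drop_size prefix0s.
have Pub : forall k, P k -> k <= n by move=> k /andP[/ltnW].
case: (ex_maxnP Pex Pub) => k /andP[kn pb] kmax.
set b := drop (n - k) w in pb.
have sb : size b = k by rewrite /b size_drop subKn // ltnW.
have bt : b = take k w by move: pb; rewrite prefixE sb => /eqP.
set a := nth c w k.
have hb : prefix (rcons b a) w by rewrite bt /a -take_nth // prefix_take.
exists a; first exact: mem_nth.
have LSw : forall u x y, x <> y -> infix (x :: u) w -> infix (y :: u) w -> prefix u w.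
  by move=> u x y xy hx hy; apply: Hl; exists x, y.
have pr : forall u, prefix u w -> prefix u (rcons w a).
  by move=> u hu; rewrite -cats1; apply: prefix_catl.
have main : forall u x y, x <> y -> infix (x :: u) (rcons w a) ->
    infix (y :: u) (rcons w a) -> ~~ infix (x :: u) w -> prefix u (rcons w a).
  move=> u x y xy; rewrite infix_rconsl => /orP[sx hy _|->//].
  case/lastP: u sx hy => [|v a'] sx; first by rewrite prefix0s.
  move: sx; rewrite -rcons_cons suffix_rcons => /andP[/eqP-> sxv] hy.
  have hyw : infix (y :: rcons v a) w.
    move: hy; rewrite infix_rconsl => /orP[|//].
    rewrite -rcons_cons suffix_rcons eqxx /= => syv.
    by exfalso; apply: xy; case: (suffix_same_size sxv syv erefl).
  have hyv : infix (y :: v) w by apply: (catr_infix (s := [:: a])); rewrite cats1.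
  have pv : prefix v w := LSw v x y xy (suffixW sxv) hyv.
  have sv : suffix v w := suffix_trans (suffix_cons v x) sxv.
  have svn : size v < n by have := size_suffix sxv.
  have Pv : P (size v).
    by rewrite /P svn; move: sv; rewrite suffixE => /eqP->.
  have := kmax _ Pv; rewrite leq_eqVlt => /orP[/eqP ek|lt].
    apply: pr; suff -> : v = b by [].
    by move: sv; rewrite suffixE ek => /eqP<-.
  apply: pr; apply: (LSw _ x y xy) => //.
  have sxb : suffix (x :: v) b.
    by apply: (suffix_le sxv); [exact: suffix_drop | rewrite sb].
  apply: (suffix_infix_trans (s2 := rcons b a)); last exact: prefixW.
  by rewrite -rcons_cons suffix_rcons eqxx.
move=> u [x [y [xy [hx hy]]]].
case hxw: (infix (x :: u) w); last by apply: (main u x y) => //; rewrite hxw.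
case hyw: (infix (y :: u) w); last first.
  by apply: (main u y x) => //; [move=> e; apply: xy | rewrite hyw].
by apply: pr; apply: (LSw u x y).
Qed.
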